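(* Let $\rho:\pi_1(T^2)=\langle q,h\mid [q,h]=1\rangle\to SL(2,\mathbb{C})$ be a homomorphism. Then the twisted chain complex $C_*(T^2;V_{2N})$ defined by $\rho_{2N}=\sigma_{2N}\circ\rho$ is acyclic for every $N\ge1$ if and only if at least one of $\rho(q)$, $\rho(h)$ neither has finite odd order nor is a parabolic matrix of trace $2$ (i.e. a non-identity, non-diagonalizable matrix of trace $2$).
   Context: For $n\ge1$, let $V_n$ be the $\mathbb{C}$-vector space of homogeneous polynomials of degree $n-1$ in $z_1,z_2$, and let $\sigma_n:SL(2,\mathbb{C})\to SL(V_n)$ be the $n$-dimensional irreducible representation $(\sigma_n(A)p)(z_1,z_2)=p\big(A^{-1}(z_1,z_2)^T\big)$. For a finite CW-complex $W$ and a homomorphism $\rho:\pi_1(W)\to SL(2,\mathbb{C})$ put $\rho_n=\sigma_n\circ\rho$. The twisted chain complex is $C_*(W;V_n)=V_n\otimes_{\mathbb{Z}[\pi_1(W)]}C_*(\widetilde W;\mathbb{Z})$, where $\widetilde W$ is the universal cover, $V_n$ is a right $\mathbb{Z}[\pi_1(W)]$-module via $\rho_n^{-1}$, and its homology is denoted $H_*(W;V_n)$. The complex (or $\rho_n$) is called acyclic if $H_*(W;V_n)=0$. *)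

(* Defs.v *)
From HB Require Import structures.
From mathcomp Require Import all_boot all_order all_algebra.
Set Implicit Arguments. Unset Strict Implicit. Unset Printing Implicit Defensive.
Import Order.TTheory GRing.Theory Num.Theory.
Local Open Scope ring_scope.

Definition i0 : 'I_2 := ord0.
Definition i1 : 'I_2 := ord_max.

(* sigma n A : matrix of sigma_n(A) on V_n (homogeneous polynomials of degree
   n-1 in z1,z2), in the basis e_k = z1^(n-1-k) z2^k, k < n.
   Row k of the matrix is the coordinate vector of sigma_n(A) e_k, so that the
   linear map sigma_n(A) acts on coordinate row vectors by v |-> v *m sigma n A.
   With A^{-1} = [[a',b'],[c',d']], (sigma_n(A) p)(z) = p(A^{-1} z) sends
   e_k to (a' z1 + b' z2)^(n-1-k) (c' z1 + d' z2)^k; dehomogenising z1 = 1,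
   z2 = t, the coordinate on e_j is the coefficient of t^j in
   (a' + b' t)^(n-1-k) (c' + d' t)^k. *)
Definition sigma {C : fieldType} (n : nat) (A : 'M[C]_2) : 'M[C]_n :=
  let Ai := invmx A in
  \matrix_(k < n, j < n)
    ((((Ai i0 i0)%:P + (Ai i0 i1)%:P * 'X) ^+ (n.-1 - k)
      * ((Ai i1 i0)%:P + (Ai i1 i1)%:P * 'X) ^+ k) : {poly C})`_j.

(* Right action of g on V_n via rho_n^{-1}: v . g = rho_n(g)^{-1} v, i.e.
   v |-> v *m invmx (sigma n (rho g)). *)
Definition ract {C : fieldType} (n : nat) (A : 'M[C]_2) : 'M[C]_n :=
  invmx (sigma n A).

(* Twisted chain complex of the torus T^2 with its standard CW structure
   (one 0-cell, 1-cells e_q, e_h, one 2-cell attached along q h q^-1 h^-1),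
   coefficients V_n, rho(q) = Q, rho(h) = H.  By Fox calculus:
     d2 (v (x) e2) = v.(1 - h) (x) e_q + v.(q - 1) (x) e_h
     d1 (v (x) e_q) = v.(q - 1) (x) e0,  d1 (v (x) e_h) = v.(h - 1) (x) e0.
   C_2 = V_n, C_1 = V_n + V_n, C_0 = V_n; maps act on row vectors on the right. *)
Definition bd2 {C : fieldType} (n : nat) (Q H : 'M[C]_2) : 'M[C]_(n, n + n) :=
  row_mx (1%:M - ract n H) (ract n Q - 1%:M).
Definition bd1 {C : fieldType} (n : nat) (Q H : 'M[C]_2) : 'M[C]_(n + n, n) :=
  col_mx (ract n Q - 1%:M) (ract n H - 1%:M).

(* H_2 = ker d2, H_1 = ker d1 / im d2, H_0 = C_0 / im d1 all vanish. *)
Definition torus_acyclic {C : fieldType} (n : nat) (Q H : 'M[C]_2) : Prop :=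
  [/\ (forall v : 'rV[C]_n, v *m bd2 n Q H = 0 -> v = 0),
      (forall w : 'rV[C]_(n + n), w *m bd1 n Q H = 0 ->
          exists v : 'rV[C]_n, w = v *m bd2 n Q H)
    & (forall u : 'rV[C]_n, exists w : 'rV[C]_(n + n), u = w *m bd1 n Q H)].

Definition finite_odd_order {C : fieldType} (A : 'M[C]_2) : Prop :=
  exists k : nat, [/\ (0 < k)%N, odd k, A ^+ k = 1
                    & forall j : nat, (0 < j < k)%N -> A ^+ j != 1].

Definition diagonalizable {C : fieldType} (A : 'M[C]_2) : Prop :=
  exists P : 'M[C]_2, P \in unitmx /\ is_diag_mx (invmx P *m A *m P).

Definition parabolic_tr2 {C : fieldType} (A : 'M[C]_2) : Prop :=
  [/\ \tr A = 2, A != 1 & ~ diagonalizable A].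

(* Main.v *)
Require Import Defs.
From HB Require Import structures.
From mathcomp Require Import all_boot all_order all_algebra.
From mathcomp Require Import ring.
From Stdlib Require Import Classical Lia.
From mathcomp Require Import zify.
Set Implicit Arguments. Unset Strict Implicit. Unset Printing Implicit Defensive.
Import Order.TTheory GRing.Theory Num.Theory.
Local Open Scope ring_scope.

Section S.
Variable C : numFieldType.

Lemma coef_lin_exp (a b : C) m j :
  ((a%:P + b%:P * 'X) ^+ m : {poly C})`_j = 'C(m, j)%:R * a ^+ (m - j) * b ^+ j.
Proof.
rewrite exprDn coef_sum.
have E i : ((a%:P) ^+ (m - i) * (b%:P * 'X) ^+ i *+ 'C(m, i) : {poly C})
    = ('C(m, i)%:R * a ^+ (m - i) * b ^+ i)%:P * 'X^i.
  by rewrite exprMn !polyCM !rmorphXn /= polyC_natr; ring.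
under eq_bigr => i _ do rewrite E coefCM coefXn.
case: (ltnP m j) => [ltmj|lejm].
  rewrite bin_small // mul0r mul0r big1 // => i _.
  case: eqP => [ei|]; last by rewrite mulr0.
  by move: (ltn_ord i); rewrite -ei ltnNge ltmj.
rewrite (bigD1 (Ordinal (leq_ltn_trans lejm (ltnSn m)))) //= eqxx mulr1 big1 ?addr0 //.
move=> i ni; case: eqP => [ei|]; last by rewrite mulr0.
by case/eqP: ni; apply/val_inj; rewrite /= ei.
Qed.


Lemma sum2 (F : 'I_2 -> C) : \sum_(i < 2) F i = F i0 + F i1.
Proof. by rewrite big_ord_recl big_ord1; congr (_ + F _); apply: val_inj. Qed.

Definition lpol (a b : C) : {poly C} := a%:P + b%:P * 'X.

Definition T (n : nat) (X : 'M[C]_2) : 'M[C]_n :=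
  \matrix_(k < n, j < n)
    ((lpol (X i0 i0) (X i0 i1)) ^+ (n.-1 - k) * (lpol (X i1 i0) (X i1 i1)) ^+ k)`_j.

Lemma sigmaE n A : sigma n A = T n (invmx A).
Proof. by []. Qed.

Definition vpow (n : nat) (u : 'rV[C]_2) : 'rV[C]_n :=
  \row_(k < n) ('C(n.-1, k)%:R * u 0 i0 ^+ (n.-1 - k) * u 0 i1 ^+ k).

Lemma vpowE n u k : vpow n u 0 k = ((lpol (u 0 i0) (u 0 i1)) ^+ n.-1)`_k.
Proof. by rewrite /lpol coef_lin_exp mxE. Qed.

Lemma vpowT n (u : 'rV[C]_2) X : vpow n.+1 u *m T n.+1 X = vpow n.+1 (u *m X).
Proof.
apply/rowP => j. rewrite mxE vpowE.
have -> : lpol ((u *m X) 0 i0) ((u *m X) 0 i1) =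
   (u 0 i0)%:P * lpol (X i0 i0) (X i0 i1) + (u 0 i1)%:P * lpol (X i1 i0) (X i1 i1).
  rewrite /lpol !mxE !sum2.
  rewrite !polyCD !polyCM; ring.
rewrite exprDn coef_sum; apply: eq_bigr => k _.
rewrite !mxE /= -coefCM; apply: (congr1 (fun p : {poly C} => p`_j)).
rewrite !exprMn !polyCM !rmorphXn /= polyC_natr -[RHS]mulr_natl; ring.
Qed.


Definition uu (i : nat) : 'rV[C]_2 := \row_(j < 2) (i%:R ^+ j).

Definition Msp n : 'M[C]_n.+1 := \matrix_(i < n.+1, k < n.+1) vpow n.+1 (uu i) 0 k.

Lemma Msp_unit n : Msp n \in unitmx.
Proof.
have -> : Msp n = (Vandermonde n.+1 (\row_(j < n.+1) (j : nat)%:R))^T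
                   *m diag_mx (\row_(k < n.+1) ('C(n, k))%:R).
  apply/matrixP => i k; rewrite mul_mx_diag !mxE /=.
  by rewrite expr0 expr1 expr1n mulr1 mulrC.
rewrite unitmxE det_mulmx det_tr det_diag det_Vandermonde unitfE mulf_neq0 //.
  apply/prodf_neq0 => i _; apply/prodf_neq0 => j lij; rewrite !mxE subr_eq0 eqr_nat.
  by rewrite eq_sym neq_ltn lij.
apply/prodf_neq0 => k _; rewrite mxE pnatr_eq0 -lt0n bin_gt0 -ltnS.
exact: ltn_ord.
Qed.

Lemma vpow_inj n (A B : 'M[C]_n.+1) :
  (forall u, vpow n.+1 u *m A = vpow n.+1 u *m B) -> A = B.
Proof.
move=> H.
have E : Msp n *m A = Msp n *m B.
  apply/row_matrixP => i; rewrite !row_mul.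
  have -> : row i (Msp n) = vpow n.+1 (uu i) by apply/rowP => k; rewrite !mxE.
  exact: H.
by rewrite -(mulKmx (Msp_unit n) A) E mulKmx // Msp_unit.
Qed.

Lemma T1 n : T n.+1 1%:M = 1%:M.
Proof. by apply: vpow_inj => u; rewrite vpowT !mulmx1. Qed.

Lemma TM n X Y : T n.+1 (Y *m X) = T n.+1 Y *m T n.+1 X.
Proof. by apply: vpow_inj => u; rewrite mulmxA !vpowT mulmxA. Qed.


Lemma invmx_eq (n : nat) (A B : 'M[C]_n) : A *m B = 1%:M -> invmx A = B.
Proof.
move=> AB; have [uA _] := mulmx1_unit AB.
by rewrite -[RHS]mul1mx -(mulVmx uA) -mulmxA AB mulmx1.
Qed.

Lemma ractE n (Q : 'M[C]_2) : Q \in unitmx -> ract n.+1 Q = T n.+1 Q.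
Proof.
move=> uQ; rewrite /ract sigmaE; apply: invmx_eq.
by rewrite -TM mulVmx // T1.
Qed.

Lemma invmx_comm (n : nat) (A B : 'M[C]_n) :
  A \in unitmx -> A *m B = B *m A -> invmx A *m B = B *m invmx A.
Proof.
move=> uA AB.
rewrite -[LHS]mulmx1 -(mulmxV uA) !mulmxA -[invmx A *m B *m A]mulmxA -AB.
by rewrite mulmxA mulVmx // mul1mx.
Qed.

Lemma acycX n (Q H : 'M[C]_2) :
  ract n Q *m ract n H = ract n H *m ract n Q ->
  (ract n Q - 1%:M) \in unitmx -> torus_acyclic n Q H.
Proof.
rewrite /torus_acyclic /bd2 /bd1.
set X := ract n Q; set Y := ract n H => XY uX.
have cZ : invmx (X - 1%:M) *m (1%:M - Y) = (1%:M - Y) *m invmx (X - 1%:M).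
  apply: invmx_comm => //.
  by rewrite mulmxBl mulmxBr !mulmxBr !mulmxBl !mul1mx !mulmx1 XY.
split.
- move=> v; rewrite mul_mx_row -row_mx0 => /eq_row_mx [_ h].
  by rewrite -(mulmxK uX v) h mul0mx.
- move=> w; rewrite -[w]hsubmxK mul_row_col => h.
  exists (rsubmx w *m invmx (X - 1%:M)).
  rewrite mul_mx_row mulmxKV //; congr row_mx.
  have h2 : lsubmx w *m (X - 1%:M) = rsubmx w *m (1%:M - Y).
    by apply/eqP; rewrite -subr_eq0 -mulmxN opprB h.
  by rewrite -mulmxA cZ mulmxA -h2 mulmxK.
- move=> u; exists (row_mx (u *m invmx (X - 1%:M)) 0).
  by rewrite mul_row_col mul0mx addr0 mulmxKV.
Qed.


Lemma acycY n (Q H : 'M[C]_2) :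
  ract n Q *m ract n H = ract n H *m ract n Q ->
  (ract n H - 1%:M) \in unitmx -> torus_acyclic n Q H.
Proof.
rewrite /torus_acyclic /bd2 /bd1.
set X := ract n Q; set Y := ract n H => XY uY.
have cZ : invmx (Y - 1%:M) *m (X - 1%:M) = (X - 1%:M) *m invmx (Y - 1%:M).
  apply: invmx_comm => //.
  rewrite !mulmxBr !mulmxBl !mul1mx !mulmx1 XY !opprB -!addrA; congr (_ + _).
  by rewrite addrCA [RHS]addrCA; congr (_ + _); exact: addrC.
split.
- move=> v; rewrite mul_mx_row -row_mx0 => /eq_row_mx [h _].
  have h' : v *m (Y - 1%:M) = 0 by rewrite -opprB mulmxN h oppr0.
  by rewrite -(mulmxK uY v) h' mul0mx.
- move=> w; rewrite -[w]hsubmxK mul_row_col => h.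
  exists (- (lsubmx w *m invmx (Y - 1%:M))).
  rewrite mul_mx_row; congr row_mx.
    by rewrite mulNmx -mulmxN opprB mulmxKV.
  have h2 : rsubmx w *m (Y - 1%:M) = - (lsubmx w *m (X - 1%:M)).
    by apply/eqP; rewrite -subr_eq0 opprK addrC h.
  by rewrite mulNmx -mulmxA cZ mulmxA -mulNmx -h2 mulmxK.
- move=> u; exists (row_mx 0 (u *m invmx (Y - 1%:M))).
  by rewrite mul_row_col mul0mx add0r mulmxKV.
Qed.


Lemma T_tri_entry n (X : 'M[C]_2) (k j : 'I_n.+1) : X i1 i0 = 0 ->
  T n.+1 X k j = if (j < k)%N then 0
                 else X i1 i1 ^+ k * ((lpol (X i0 i0) (X i0 i1)) ^+ (n - k))`_(j - k).
Proof.
move=> X10; rewrite mxE /= {2}/lpol X10 add0r exprMn -rmorphXn /=.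
rewrite mulrA coefMXn coefMC; case: ifP => // _.
by rewrite mulrC.
Qed.

Lemma Ttri n (X : 'M[C]_2) (v : 'rV[C]_n.+1) : X i1 i0 = 0 -> v != 0 ->
  v *m T n.+1 X = v -> exists k, (k <= n)%N /\ X i0 i0 ^+ (n - k) * X i1 i1 ^+ k = 1.
Proof.
move=> X10 nv vT.
have exP : exists i, (i < n.+1)%N && (v 0 (inord i) != 0).
  case: (pickP (fun i => v 0 i != 0)) => [i hi | h].
    by exists i; rewrite ltn_ord inord_val.
  case/eqP: nv; apply/rowP => i; rewrite mxE.
  by have := h i; case: eqP.
case: (ex_minnP exP) => k0 /andP [lk0 nk0] mink0.
set K : 'I_n.+1 := inord k0.
have kK : (K : nat) = k0 by rewrite inordK.
have hK : (v *m T n.+1 X) 0 K = v 0 K by rewrite vT.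
rewrite mxE (bigD1 K) //= big1 ?addr0 in hK.
  exists K; split; first by rewrite -ltnS.
  move: hK; rewrite T_tri_entry // ltnn subnn coef_lin_exp bin0 mul1r subn0 expr0 mulr1.
  rewrite -[X in _ = X]mulr1 => /(mulfI nk0); by rewrite mulrC.
move=> i niK; case: (ltngtP i K) => hi.
- have -> : v 0 i = 0; last by rewrite mul0r.
  apply/eqP; apply: contraTT hi => hv; rewrite -leqNgt kK.
  by apply: mink0; rewrite ltn_ord inord_val.
- by rewrite T_tri_entry // hi mulr0.
- by case/eqP: niK; apply: val_inj.
Qed.


Lemma ord2P (i : 'I_2) : i = i0 \/ i = i1.
Proof. by case: i => [[|[|//]]] hi; [left|right]; apply: val_inj. Qed.

Lemma mat2P (A B : 'M[C]_2) : A i0 i0 = B i0 i0 -> A i0 i1 = B i0 i1 ->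
  A i1 i0 = B i1 i0 -> A i1 i1 = B i1 i1 -> A = B.
Proof.
move=> h00 h01 h10 h11; apply/matrixP => i j.
by case: (ord2P i) => ->; case: (ord2P j) => ->.
Qed.

Lemma mul2E (A B : 'M[C]_2) i j : (A *m B) i j = A i i0 * B i0 j + A i i1 * B i1 j.
Proof. by rewrite mxE sum2. Qed.

Lemma det2 (A : 'M[C]_2) : \det A = A i0 i0 * A i1 i1 - A i0 i1 * A i1 i0.
Proof.
rewrite (expand_det_row _ i0) sum2 /cofactor !det_mx11 !mxE /=.
rewrite expr0 expr1 mul1r mulN1r mulrN.
have -> : lift i0 0 = i1 by apply: val_inj.
have -> : lift i1 0 = i0 by apply: val_inj.
by [].
Qed.

Lemma tr2 (A : 'M[C]_2) : \tr A = A i0 i0 + A i1 i1.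
Proof. by rewrite /mxtrace sum2. Qed.

Lemma id2E i j : (1%:M : 'M[C]_2) i j = (i == j)%:R.
Proof. by rewrite mxE. Qed.

Lemma sing n (A : 'M[C]_n) (u : 'rV_n) : u != 0 -> u *m A = 0 -> \det A = 0.
Proof.
move=> nu uA; apply/eqP; apply: contraNT nu => dA.
have uA' : A \in unitmx by rewrite unitmxE unitfE.
by rewrite -(mulmxK uA' u) uA mul0mx.
Qed.

Lemma tri_pow (W : 'M[C]_2) t : W i1 i0 = 0 ->
  [/\ (W ^+ t) i0 i0 = W i0 i0 ^+ t, (W ^+ t) i1 i0 = 0, (W ^+ t) i1 i1 = W i1 i1 ^+ t
    & (W i0 i0 - W i1 i1) * (W ^+ t) i0 i1 = W i0 i1 * (W i0 i0 ^+ t - W i1 i1 ^+ t)].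
Proof.
move=> W10; elim: t => [|t [h00 h10 h11 h01]].
  by rewrite expr0 !id2E /= !expr0 subrr !mulr0.
rewrite exprSr -mulmxE !mul2E h00 h10 h11 W10 !exprSr; split.
- by rewrite mulr0 addr0.
- by rewrite mul0r mulr0 addr0.
- by rewrite mul0r add0r.
have -> : (W i0 i0 - W i1 i1) * (W i0 i0 ^+ t * W i0 i1 + (W ^+ t) i0 i1 * W i1 i1)
   = (W i0 i0 - W i1 i1) * W i0 i0 ^+ t * W i0 i1
     + ((W i0 i0 - W i1 i1) * (W ^+ t) i0 i1) * W i1 i1 by ring.
rewrite h01; ring.
Qed.

Lemma tri_pow1 (W : 'M[C]_2) e : W i1 i0 = 0 -> W i0 i0 != W i1 i1 ->
  W i0 i0 ^+ e = 1 -> W i1 i1 ^+ e = 1 -> W ^+ e = 1.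
Proof.
move=> W10 ne ae be; have [h00 h10 h11 h01] := tri_pow e W10.
apply: mat2P; rewrite ?id2E //=.
- by rewrite h00.
- apply: (mulfI (x := W i0 i0 - W i1 i1)); first by rewrite subr_eq0.
  by rewrite h01 ae be subrr !mulr0.
- by rewrite h11.
Qed.

Lemma conj_pow (P W : 'M[C]_2) t : P \in unitmx ->
  (invmx P *m W *m P) ^+ t = invmx P *m W ^+ t *m P.
Proof.
move=> uP; elim: t => [|t IH]; first by rewrite !expr0 mulmx1 mulVmx.
rewrite exprSr IH exprSr -!mulmxE !mulmxA.
by rewrite -[invmx P *m W ^+ t *m P *m invmx P]mulmxA mulmxV // mulmx1.
Qed.

End S.

Section Cl.
Variable C : numClosedFieldType.

Lemma eig_ex (A : 'M[C]_2) : exists mu (u : 'rV_2), u != 0 /\ u *m A = mu *: u.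
Proof.
have : size (char_poly A) != 1 by rewrite size_char_poly.
case/closed_rootP => mu hr; rewrite -eigenvalue_root_char in hr.
by case/eigenvalueP: hr => u h nu; exists mu, u.
Qed.

Lemma common_eig (Q H : 'M[C]_2) : Q *m H = H *m Q ->
  exists (u : 'rV_2) mu nu, [/\ u != 0, u *m Q = mu *: u & u *m H = nu *: u].
Proof.
move=> QH; have [mu [u0 [nu0 hu0]]] := eig_ex Q.
case: (eqVneq (Q - mu%:M) 0) => [A0|nA].
  have [nu [u [nu1 hu]]] := eig_ex H.
  exists u, mu, nu; split=> //.
  by move/eqP: A0; rewrite subr_eq0 => /eqP ->; rewrite mul_mx_scalar.
set A := Q - mu%:M.
have u0A : u0 *m A = 0 by rewrite mulmxBr hu0 mul_mx_scalar subrr.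
have wA : u0 *m H *m A = 0.
  rewrite -mulmxA /A mulmxBr -QH scalar_mxC -mulmxBl mulmxA.
  by rewrite -/A u0A mul0mx.
have rA : \rank A = 1%N.
  have r0 : \rank A != 0%N by rewrite mxrank_eq0.
  have r2 : \rank A != 2%N.
    apply/negP => /eqP r2.
    have : A \in unitmx by rewrite -row_free_unit /row_free r2.
    move=> uA; move/negP: nu0; apply; apply/eqP.
    by rewrite -(mulmxK uA u0) u0A mul0mx.
  have := rank_leq_row A; move: r0 r2; case: (\rank A) => [|[|[|]]] //.
have sK : (u0 <= kermx A)%MS by apply/sub_kermxP.
have eK : (u0 == kermx A)%MS.
  have := mxrank_leqif_eq sK; rewrite mxrank_ker rA rank_rV nu0 /=.
  by move=> [_ <-].
have : (u0 *m H <= u0)%MS.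
  apply: submx_trans (_ : (kermx A <= u0)%MS).
    by apply/sub_kermxP.
  by case/andP: eK.
case/sub_rVP => nu hn.
by exists u0, mu, nu.
Qed.

Lemma vpowZ n c (u : 'rV[C]_2) : vpow n.+1 (c *: u) = c ^+ n *: vpow n.+1 u.
Proof.
apply/rowP => k; rewrite !mxE /=.
have -> : c ^+ n = c ^+ (n - k) * c ^+ k by rewrite -exprD subnK // -ltnS.
rewrite !exprMn; ring.
Qed.

Lemma vpow_neq0 n (u : 'rV[C]_2) : u != 0 -> vpow n.+1 u != 0.
Proof.
move=> nu; case: (eqVneq (u 0 i0) 0) => h0.
  have h1 : u 0 i1 != 0.
    apply: contraNneq nu => h1; apply/eqP/rowP => j; rewrite mxE.
    by case: (ord2P j) => ->.
  apply/eqP => /rowP /(_ ord_max); rewrite !mxE /= subnn binn expr0 !mul1r.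
  by move/eqP; rewrite expf_eq0 (negPf h1) andbF.
apply/eqP => /rowP /(_ ord0); rewrite !mxE /= subn0 bin0 expr0 mul1r mulr1.
by move/eqP; rewrite expf_eq0 (negPf h0) andbF.
Qed.

Lemma pow_eig n (A : 'M[C]_2) (u : 'rV_2) mu : u *m A = mu *: u -> u *m A ^+ n = mu ^+ n *: u.
Proof.
move=> h; elim: n => [|n IH]; first by rewrite !expr0 mulmx1 scale1r.
by rewrite exprSr -mulmxE mulmxA IH -scalemxAl h scalerA exprSr mulrC.
Qed.

Lemma det1_unit (Q : 'M[C]_2) : \det Q = 1 -> Q \in unitmx.
Proof. by move=> d; rewrite unitmxE d unitr1. Qed.


Lemma scal_cancel (u : 'rV[C]_2) a b : u != 0 -> a *: u = b *: u -> a = b.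
Proof.
move=> nu h; apply/eqP; rewrite -subr_eq0; apply/eqP.
have : (a - b) *: u = 0 by rewrite scalerBl h subrr.
by move/eqP; rewrite scaler_eq0 (negPf nu) orbF => /eqP.
Qed.

Lemma par_eig (Q : 'M[C]_2) (u : 'rV_2) mu : \det Q = 1 -> \tr Q = 2 ->
  u != 0 -> u *m Q = mu *: u -> mu = 1.
Proof.
move=> dQ tQ nu h.
have : \det (Q - mu%:M) = 0.
  by apply: (sing nu); rewrite mulmxBr h mul_mx_scalar subrr.
rewrite det2 !mxE /= !mulr1n !mulr0n !subr0.
move: dQ tQ; rewrite det2 tr2 => dQ tQ.
have -> : (Q i0 i0 - mu) * (Q i1 i1 - mu) - Q i0 i1 * Q i1 i0
   = (Q i0 i0 * Q i1 i1 - Q i0 i1 * Q i1 i0) - mu * (Q i0 i0 + Q i1 i1) + mu ^+ 2 by ring.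
rewrite dQ tQ => h2.
have : (mu - 1) ^+ 2 = 0 by rewrite -h2; ring.
by move/eqP; rewrite expf_eq0 /= subr_eq0 => /eqP.
Qed.

Lemma odd_eig (Q : 'M[C]_2) : \det Q = 1 ->
  finite_odd_order Q \/ parabolic_tr2 Q ->
  exists k, odd k /\ forall (u : 'rV_2) mu, u != 0 -> u *m Q = mu *: u -> mu ^+ k = 1.
Proof.
move=> dQ [[k [k0 ok Qk _]] | [tQ _ _]].
  exists k; split=> // u mu nu h.
  apply: (scal_cancel nu); rewrite scale1r -(pow_eig k h) Qk mulmx1.
  done.
by exists 1%N; split=> // u mu nu h; rewrite expr1 (par_eig dQ tQ nu h).
Qed.


Lemma nonacyc (Q H : 'M[C]_2) m : \det Q = 1 -> \det H = 1 -> Q *m H = H *m Q ->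
  (forall (u : 'rV_2) mu, u != 0 -> u *m Q = mu *: u -> mu ^+ m = 1) ->
  (forall (u : 'rV_2) mu, u != 0 -> u *m H = mu *: u -> mu ^+ m = 1) ->
  ~ torus_acyclic m.+1 Q H.
Proof.
move=> dQ dH QH hQ hH [h2 _ _].
have [u [mu [nu [nu0 hu hv]]]] := common_eig QH.
set v := vpow m.+1 u.
have vQ : v *m ract m.+1 Q = v.
  by rewrite ractE ?det1_unit // /v vpowT hu vpowZ (hQ u mu) // scale1r.
have vH : v *m ract m.+1 H = v.
  by rewrite ractE ?det1_unit // /v vpowT hv vpowZ (hH u nu) // scale1r.
have v0 : v = 0.
  apply: h2; rewrite /bd2 mul_mx_row !mulmxBr !mulmx1 vQ vH !subrr.
  by rewrite row_mx0.
by move: (vpow_neq0 m nu0); rewrite -/v v0 eqxx.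
Qed.


Lemma fo_of_pow (Q : 'M[C]_2) e : odd e -> Q ^+ e = 1 -> finite_odd_order Q.
Proof.
move=> oe Qe.
have exP : exists k, (0 < k)%N && (Q ^+ k == 1).
  by exists e; rewrite odd_gt0 // Qe eqxx.
case: (ex_minnP exP) => k /andP [k0 /eqP Qk] mink.
have dk : (k %| e)%N.
  rewrite (divn_eq e k) exprD mulnC exprM Qk expr1n mul1r in Qe.
  apply/dvdnP; exists (e %/ k)%N; rewrite {1}(divn_eq e k); apply/eqP.
  rewrite -[X in _ == X]addn0 eqn_add2l; apply/negPn/negP => h.
  have := mink (e %% k)%N; rewrite lt0n h Qe eqxx /= => /(_ erefl).
  by rewrite leqNgt ltn_pmod.
have ok : odd k by move: oe; case/dvdnP: dk => c ->; rewrite oddM => /andP [].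
exists k; split => // j /andP [j0 jk]; apply/eqP => Qj.
by have := mink j; rewrite j0 Qj eqxx /= => /(_ erefl); rewrite leqNgt jk.
Qed.


Lemma tri_form (Q : 'M[C]_2) : exists P : 'M[C]_2, P \in unitmx /\ (P *m Q *m invmx P) i1 i0 = 0.
Proof.
have [la [u [nu hu]]] := eig_ex Q.
set r : 'rV[C]_2 := if u 0 i0 == 0 then \row_j (j == i0)%:R else \row_j (j == i1)%:R.
set P : 'M[C]_2 := \matrix_(i < 2, j < 2) if i == i0 then r 0 j else u 0 j.
have P1 : row i1 P = u by apply/rowP => j; rewrite !mxE.
have uP : P \in unitmx.
  rewrite unitmxE unitfE det2 !mxE /= /r.
  case: (eqVneq (u 0 i0) 0) => h0.
    rewrite h0 !mxE /= mulr0 subr0 mul1r.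
    apply: contraNneq nu => h1; apply/eqP/rowP => j; rewrite mxE.
    by case: (ord2P j) => ->.
  by rewrite !mxE /= mul0r sub0r mul1r oppr_eq0.
exists P; split => //.
have : row i1 (P *m Q *m invmx P) = la *: row i1 (1%:M : 'M[C]_2).
  by rewrite !row_mul P1 hu -scalemxAl -P1 -row_mul mulmxV.
move/(congr1 (fun w : 'rV_2 => w 0 i0)); rewrite !mxE /= => ->.
by rewrite mulr0.
Qed.


Lemma exp_odd_cancel (a b : C) m k : a * b = 1 -> odd m -> (k <= m)%N ->
  a ^+ (m - k) * b ^+ k = 1 -> exists e, odd e /\ a ^+ e = 1 /\ b ^+ e = 1.
Proof.
move=> ab om km h.
have a0 : a != 0 by apply: contra_eq_neq ab => ->; rewrite mul0r eq_sym oner_eq0.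
have ak0 : a ^+ k != 0 by rewrite expf_neq0.
have hk : a ^+ (m - k) = a ^+ k.
  by move/(congr1 (fun x => x * a ^+ k)): h; rewrite mul1r -mulrA -exprMn (mulrC b) ab expr1n mulr1.
suff [e [oe ae]] : exists e, odd e /\ a ^+ e = 1.
  exists e; split => //; split => //.
  by rewrite -[LHS]mul1r -{1}ae -exprMn ab expr1n.
case: (leqP k (m - k)) => hl.
  exists (m - k - k)%N; split.
    by rewrite oddB // oddB // addbK.
  apply: (mulIf ak0); rewrite mul1r -exprD subnK //.
exists (k - (m - k))%N; split.
  rewrite oddB ?(ltnW hl) // oddB //.
  by case: (odd m) om; case: (odd k).
apply: (mulIf (expf_neq0 (m - k) a0)); by rewrite mul1r -exprD subnK ?(ltnW hl).
Qed.


Lemma unitTQ (Q : 'M[C]_2) m : \det Q = 1 -> odd m ->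
  ~ finite_odd_order Q -> ~ parabolic_tr2 Q -> (ract m.+1 Q - 1%:M) \in unitmx.
Proof.
move=> dQ om nfo npar.
have uQ := det1_unit dQ.
rewrite ractE //; case: (boolP (_ \in unitmx)) => // nU; exfalso.
have : eigenvalue (T m.+1 Q) 1 by rewrite /eigenvalue /eigenspace kermx_eq0 row_free_unit.
case/eigenvalueP => v vT nv; rewrite scale1r in vT.
have [P [uP W10]] := tri_form Q.
set W := P *m Q *m invmx P in W10.
have QW : Q = invmx P *m W *m P.
  by rewrite /W !mulmxA mulVmx // mul1mx -mulmxA mulVmx // mulmx1.
have TPV : T m.+1 P *m T m.+1 (invmx P) = 1%:M by rewrite -TM mulmxV // T1.
have TVP : T m.+1 (invmx P) *m T m.+1 P = 1%:M by rewrite -TM mulVmx // T1.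
set v' := v *m T m.+1 (invmx P).
have v'T : v' *m T m.+1 W = v'.
  rewrite -[LHS]mulmx1 -TPV /v' !mulmxA.
  rewrite -(mulmxA v) -(mulmxA v) -TM -TM -QW.
  by rewrite vT.
have nv' : v' != 0.
  apply: contraNneq nv => h.
  by rewrite -[v]mulmx1 -TVP mulmxA -/v' h mul0mx.
have [k [km hk]] := Ttri W10 nv' v'T.
have dW : W i0 i0 * W i1 i1 = 1.
  have : \det W = 1.
    by rewrite /W !det_mulmx det_inv dQ mulr1 mulfV // -unitfE -unitmxE.
  by rewrite det2 W10 mulr0 subr0.
have [e [oe [ae be]]] := exp_odd_cancel dW om km hk.
case: (eqVneq (W i0 i0) (W i1 i1)) => hab; last first.
  apply: nfo; apply: (fo_of_pow oe).
  by rewrite QW conj_pow // tri_pow1 // mulmx1 mulVmx.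
have a1 : W i0 i0 = 1.
  have sq : W i0 i0 ^+ 2 = 1 by rewrite expr2 {2}hab.
  move: ae; rewrite -(odd_double_half e) oe /= exprD expr1 -muln2 mulnC exprM sq.
  by rewrite expr1n mulr1.
have tQ : \tr Q = 2.
  by rewrite QW mxtrace_mulC mulmxA mulmxV // mul1mx tr2 -hab a1.
case: (eqVneq Q 1%:M) => hQ.
  apply: nfo; exists 1%N; split => //.
  by move=> j /andP [j0 j1]; move: j1; rewrite ltnNge j0.
apply: npar; split => // -[R [uR /is_diag_mxP dD]].
set D := invmx R *m Q *m R in dD.
have D01 : D i0 i1 = 0 by apply: dD.
have D10 : D i1 i0 = 0 by apply: dD.
have dD1 : D i0 i0 * D i1 i1 = 1.
  have : \det D = 1.
    by rewrite /D !det_mulmx det_inv dQ mulr1 mulVf // -unitfE -unitmxE.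
  by rewrite det2 D10 mulr0 subr0.
have tD : D i0 i0 + D i1 i1 = 2.
  by rewrite -tr2 /D mxtrace_mulC mulmxA mulmxV // mul1mx.
have d0 : D i0 i0 = 1.
  have : (D i0 i0 - 1) ^+ 2 = 0.
    have e1 : D i1 i1 = 2 - D i0 i0 by rewrite -tD addrAC subrr add0r.
    have -> : (D i0 i0 - 1) ^+ 2 = 1 - D i0 i0 * (2 - D i0 i0) by ring.
    by rewrite -e1 dD1 subrr.
  by move/eqP; rewrite expf_eq0 /= subr_eq0 => /eqP.
have d1 : D i1 i1 = 1 by move: dD1; rewrite d0 mul1r.
have D1 : D = 1%:M by apply: mat2P; rewrite ?id2E //= ?d0 ?d1 ?D01 ?D10.
case/eqP: hQ.
have -> : Q = R *m D *m invmx R.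
  by rewrite /D !mulmxA mulmxV // mul1mx -mulmxA mulmxV // mulmx1.
by rewrite D1 mulmx1 mulmxV.
Qed.

End Cl.

Unset Implicit Arguments.

Lemma ract_comm (C : numClosedFieldType) (Q H : 'M[C]_2) m : \det Q = 1 -> \det H = 1 ->
  Q *m H = H *m Q -> ract m.+1 Q *m ract m.+1 H = ract m.+1 H *m ract m.+1 Q.
Proof.
by move=> dQ dH QH; rewrite !ractE ?det1_unit // -!TM QH.
Qed.

Theorem mainTheorem2 (C : numClosedFieldType) (Q H : 'M[C]_2) :
  \det Q = 1 -> \det H = 1 -> Q *m H = H *m Q ->
  ((forall N : nat, (0 < N)%N -> torus_acyclic (2 * N) Q H) <->
   ((~ finite_odd_order Q /\ ~ parabolic_tr2 Q) \/
    (~ finite_odd_order H /\ ~ parabolic_tr2 H))).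
Proof.
move=> dQ dH QH; split.
- move=> hL.
  case: (classic (finite_odd_order Q \/ parabolic_tr2 Q)) => hQ; last first.
    by left; split => h; apply: hQ; [left|right].
  case: (classic (finite_odd_order H \/ parabolic_tr2 H)) => hH; last first.
    by right; split => h; apply: hH; [left|right].
  exfalso.
  have [kQ [oQ eQ]] := odd_eig dQ hQ.
  have [kH [oH eH]] := odd_eig dH hH.
  set m := (kQ * kH)%N.
  have om : odd m by rewrite /m oddM oQ oH.
  have e2 : (2 * (m./2.+1))%N = m.+1.
    have := odd_double_half m; rewrite om -muln2 /=; lia.
  have := hL m./2.+1 (ltn0Sn _); rewrite e2.
  apply: nonacyc => // u mu nu h.
    by rewrite /m exprM (eQ u mu) // expr1n.
  by rewrite /m mulnC exprM (eH u mu) // expr1n.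
- move=> hR N N0.
  have e : (2 * N)%N = (2 * N).-1.+1 by rewrite prednK // muln_gt0.
  have om : odd (2 * N).-1.
    by rewrite -subn1 oddB ?muln_gt0 // oddM.
  rewrite e; have cm := ract_comm _ _ _ (2 * N).-1 dQ dH QH.
  case: hR => [[nfo npar]|[nfo npar]].
    by apply: acycX => //; apply: unitTQ.
  by apply: acycY => //; apply: unitTQ.
Qed.
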